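(* Let $H$ be a graph whose number $c(H)$ of connected components satisfies $c(H)\ge 2$. (a) If $c(H)\ge 4$, then $O_{\rm SR}(K_1\odot H)=\mathcal{B}$. (b) If $c(H)=3$, then $O_{\rm SR}(K_1\odot H)=\mathcal{N}$ if $H\cong 3K_1$, and $O_{\rm SR}(K_1\odot H)=\mathcal{B}$ otherwise. (c) If $c(H)=2$, then $O_{\rm SR}(K_1\odot H)=\mathcal{M}$ if $H\cong 2K_1$; $O_{\rm SR}(K_1\odot H)=\mathcal{N}$ if $H\in\{K_1\cup K_2, K_1\cup P_3\}$ or $H\cong K_1\cup H^*$, where $H^*$ is a connected graph of order $m\ge 4$ such that $\deg_{H^*}(w)\in\{m-2,m-1\}$ for each $w\in V(H^* )$ and at most two vertices of $H^*$ have degree $m-1$; and $O_{\rm SR}(K_1\odot H)=\mathcal{B}$ otherwise.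
   Context: All graphs are finite, simple and undirected. $P_n,K_n$ denote the path and complete graph on $n$ vertices; $kK_1$ is the edgeless graph on $k$ vertices and $\cup$ denotes disjoint union. $K_1\odot H$ (the corona product of $K_1$ with $H$) is the graph obtained from $H$ by adding one new vertex adjacent to every vertex of $H$. A set $S\subseteq V(X)$ is a strong resolving set of a connected graph $X$ if for all distinct $x,y\in V(X)$ there exists $z\in S$ such that $x$ lies on a $y$–$z$ geodesic or $y$ lies on an $x$–$z$ geodesic. The Maker–Breaker strong resolving game on $X$: Maker and Breaker alternately select a not-yet-chosen vertex of $X$; Maker wins if the vertices he selects contain a strong resolving set of $X$, Breaker wins otherwise. In the M-game Maker moves first, in the B-game Breaker moves first. $O_{\rm SR}(X)=\mathcal{M}$ if Maker has a winning strategy in both games, $\mathcal{B}$ if Breaker has a winning strategy in both, and $\mathcal{N}$ if the first player has a winning strategy in each. *)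

(* Defs.v *)
From mathcomp Require Import all_boot.
Set Implicit Arguments. Unset Strict Implicit. Unset Printing Implicit Defensive.

(** Graphs are given by a vertex finType and an adjacency relation;
    a (finite simple) graph has a symmetric irreflexive relation. *)

Definition on_geodesic (V : finType) (adj : rel V) (x y z : V) : Prop :=
  exists p : seq V,
    [/\ path adj y p, last y p = z, x \in y :: p &
        forall q : seq V, path adj y q -> last y q = z -> size p <= size q].

Definition strong_resolving (V : finType) (adj : rel V) (S : {set V}) : Prop :=
  forall x y : V, x != y ->
    exists2 z, z \in S & (on_geodesic adj x y z \/ on_geodesic adj y x z).

(** Maker-Breaker strong resolving game. M = Maker's vertices, B = Breaker's.
    The game ends when all vertices are chosen; fuel k >= number of free vertices. *)
Fixpoint maker_wins (V : finType) (adj : rel V) (k : nat) (maker_turn : bool)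
    (M B : {set V}) : Prop :=
  if ~: (M :|: B) == set0 then strong_resolving adj M else
  match k with
  | 0 => strong_resolving adj M
  | k'.+1 =>
    if maker_turn then exists v, v \notin M :|: B /\ maker_wins adj k' false (v |: M) B
    else forall v, v \notin M :|: B -> maker_wins adj k' true M (v |: B)
  end.

Fixpoint breaker_wins (V : finType) (adj : rel V) (k : nat) (maker_turn : bool)
    (M B : {set V}) : Prop :=
  if ~: (M :|: B) == set0 then ~ strong_resolving adj M else
  match k with
  | 0 => ~ strong_resolving adj M
  | k'.+1 =>
    if maker_turn then forall v, v \notin M :|: B -> breaker_wins adj k' false (v |: M) B
    else exists v, v \notin M :|: B /\ breaker_wins adj k' true M (v |: B)
  end.

Definition maker_wins_Mgame (V : finType) (adj : rel V) := maker_wins adj #|V| true set0 set0.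
Definition maker_wins_Bgame (V : finType) (adj : rel V) := maker_wins adj #|V| false set0 set0.
Definition breaker_wins_Mgame (V : finType) (adj : rel V) := breaker_wins adj #|V| true set0 set0.
Definition breaker_wins_Bgame (V : finType) (adj : rel V) := breaker_wins adj #|V| false set0 set0.

Definition OSR_M (V : finType) (adj : rel V) := maker_wins_Mgame adj /\ maker_wins_Bgame adj.
Definition OSR_B (V : finType) (adj : rel V) := breaker_wins_Mgame adj /\ breaker_wins_Bgame adj.
Definition OSR_N (V : finType) (adj : rel V) := maker_wins_Mgame adj /\ breaker_wins_Bgame adj.

(** K_1 (.) H : the new vertex is None. *)
Definition corona_adj (T : finType) (e : rel T) : rel (option T) :=
  fun u v => match u, v with
             | None, None => false
             | None, Some _ => true
             | Some _, None => true
             | Some x, Some y => e x y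
             end.

Definition ncomp (T : finType) (e : rel T) : nat :=
  #|[set [set y | connect e x y] | x : T]|.

Definition connected_graph (T : finType) (e : rel T) : Prop :=
  forall x y : T, connect e x y.

Definition deg (T : finType) (e : rel T) (x : T) : nat := #|[set y | e x y]|.

Definition isomorphic (T1 T2 : finType) (e1 : rel T1) (e2 : rel T2) : Prop :=
  exists f : T1 -> T2, bijective f /\ forall x y, e2 (f x) (f y) = e1 x y.

Definition edgeless (k : nat) : rel 'I_k := fun _ _ => false.
Definition complete (n : nat) : rel 'I_n := fun i j => i != j.
Definition pathg (n : nat) : rel 'I_n :=
  fun i j => (i.+1 == j :> nat) || (j.+1 == i :> nat).
Arguments edgeless k : clear implicits.
Arguments complete n : clear implicits.
Arguments pathg n : clear implicits.

Definition gunion (T1 T2 : finType) (e1 : rel T1) (e2 : rel T2) : rel (T1 + T2) :=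
  fun u v => match u, v with
             | inl x, inl y => e1 x y
             | inr x, inr y => e2 x y
             | _, _ => false
             end.

Definition K1_union_Hstar (T : finType) (e : rel T) : Prop :=
  exists (U : finType) (f : rel U),
    [/\ symmetric f, irreflexive f, connected_graph f, 4 <= #|U| &
      [/\ (forall w : U, deg f w = #|U| - 2 \/ deg f w = #|U| - 1),
        #|[set w | deg f w == #|U| - 1]| <= 2 &
        isomorphic e (gunion (edgeless 1) f)]].

Definition caseN2 (T : finType) (e : rel T) : Prop :=
  isomorphic e (gunion (edgeless 1) (complete 2)) \/
  isomorphic e (gunion (edgeless 1) (pathg 3)) \/
  K1_union_Hstar e.

(* Main.v *)
Require Import Defs.
From mathcomp Require Import all_boot.
From mathcomp Require Import zify.
From Stdlib Require Import Classical_Prop.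
Set Implicit Arguments. Unset Strict Implicit. Unset Printing Implicit Defensive.

Section Game.
Variables (V : finType) (adj : rel V) (R : rel V).
Hypothesis Rsym : symmetric R.
Hypothesis Rirr : irreflexive R.
Hypothesis HA : forall M : {set V}, (forall x y, R x y -> x \in M \/ y \in M) -> strong_resolving adj M.
Hypothesis HB : forall (M : {set V}) x y, R x y -> x \notin M -> y \notin M -> ~ strong_resolving adj M.

Definition Inv (M B : {set V}) :=
  (forall x y, R x y -> x \notin M -> y \notin M -> x \notin B) /\
  (forall x y z, R x y -> R x z -> x \notin M -> y \notin M -> z \notin M -> y = z).

Lemma Inv_addM M B w : Inv M B -> Inv (w |: M) B.
Proof.
case=> H1 H2; split.
  move=> x y r; rewrite !in_setU1 !negb_or => /andP[_ hx] /andP[_ hy]; exact: H1 r hx hy.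
move=> x y z r1 r2; rewrite !in_setU1 !negb_or => /andP[_ hx] /andP[_ hy] /andP[_ hz].
exact: H2 r1 r2 hx hy hz.
Qed.

Lemma Inv_end M B : Inv M B -> ~: (M :|: B) = set0 -> strong_resolving adj M.
Proof.
case=> H1 _ hE; apply: HA => x y r.
case: (boolP (x \in M)) => hx; first by left.
case: (boolP (y \in M)) => hy; first by right.
have : x \in ~: (M :|: B) by rewrite inE in_setU negb_or hx (H1 _ _ r hx hy).
by rewrite hE inE.
Qed.

Lemma free_nonempty (M B : {set V}) : ~: (M :|: B) != set0 -> exists v, v \notin M :|: B.
Proof. by case/set0Pn => v; rewrite inE => ?; exists v. Qed.

Lemma card_free_add (M B : {set V}) v : v \notin M :|: B ->
  #|~: (M :|: B)| = (#|~: ((v |: M) :|: B)|).+1.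
Proof.
move=> hv.
have -> : ~: (M :|: B) = v |: ~: ((v |: M) :|: B).
  apply/setP => x; rewrite !inE; case: (eqVneq x v) => [->|] //=.
  by move: hv; rewrite inE.
by rewrite cardsU1 !inE eqxx.
Qed.

Lemma card_free_addB (M B : {set V}) v : v \notin M :|: B ->
  #|~: (M :|: B)| = (#|~: (M :|: (v |: B))|).+1.
Proof.
move=> hv; rewrite (card_free_add hv).
have -> : (v |: M) :|: B = M :|: (v |: B) by rewrite setUA (setUC [set v]) -setUA.
by [].
Qed.

Lemma maker_inv n : forall k t M B, k <= n -> #|~: (M :|: B)| <= k -> Inv M B ->
  maker_wins adj k t M B.
Proof.
elim: n => [|n IH] k t M B hk hc hI.
  move: hk; rewrite leqn0 => /eqP hk; subst k.
  have hE0 : ~: (M :|: B) = set0 by apply/eqP; rewrite -cards_eq0 -leqn0.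
  by rewrite /= hE0 eqxx; exact: Inv_end hI hE0.
case: k hk hc => [|k] hk hc.
  have hE0 : ~: (M :|: B) = set0 by apply/eqP; rewrite -cards_eq0 -leqn0.
  by rewrite /= hE0 eqxx; exact: Inv_end hI hE0.
rewrite /=; case: ifP => hE; first exact: (Inv_end hI (eqP hE)).
case: t.
  have [w hw] := free_nonempty (negbT hE).
  exists w; split=> //; apply: IH => //; last exact: Inv_addM.
  by move: hc; rewrite (card_free_add hw).
move=> v hv.
have hc' : #|~: (M :|: (v |: B))| <= k by move: hc; rewrite (card_free_addB hv).
have hvM : v \notin M by move: hv; rewrite in_setU negb_or => /andP[].
case: (hI) => H1 H2.
have Hend : ~: (M :|: (v |: B)) = set0 -> strong_resolving adj M.
  move=> hE'; apply: HA => x y r.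
  case: (boolP (x \in M)) => hx; first by left.
  case: (boolP (y \in M)) => hy; first by right.
  exfalso.
  have hxB := H1 _ _ r hx hy.
  have hyB : y \notin B by apply: (H1 y x) => //; rewrite Rsym.
  have ex : x \in ~: (M :|: (v |: B)) -> False by rewrite hE' inE.
  have ey : y \in ~: (M :|: (v |: B)) -> False by rewrite hE' inE.
  have xv : x = v.
    apply/eqP; apply/negPn/negP => nx; apply: ex; by rewrite !inE negb_or hx /= negb_or nx.
  have yv : y = v.
    apply/eqP; apply/negPn/negP => nx; apply: ey; by rewrite !inE negb_or hy /= negb_or nx.
  by move: r; rewrite xv yv Rirr.
case: k hk hc hc' => [|k] hk hc hc'.
  have hE0 : ~: (M :|: (v |: B)) = set0 by apply/eqP; rewrite -cards_eq0 -leqn0.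
  by rewrite /= hE0 eqxx; exact: Hend.
rewrite /=; case: ifP => hE'; first exact: Hend (eqP hE').
have Hstep : forall w, w \notin M :|: (v |: B) -> (forall y, R v y -> y \notin M -> y = w) ->
    maker_wins adj k false (w |: M) (v |: B).
  move=> w hw hy; apply: IH.
  - by move: hk; rewrite !ltnS; apply: leq_trans.
  - by move: hc'; rewrite (card_free_add hw).
  split.
    move=> x y r; rewrite !in_setU1 !negb_or => /andP[xw hx] /andP[yw hy'].
    rewrite (H1 _ _ r hx hy') andbT.
    apply/negP => /eqP xv.
    by subst x; move: (hy y r hy') => yw'; rewrite yw' eqxx in yw.
  move=> x y z r1 r2; rewrite !in_setU1 !negb_or => /andP[_ hx] /andP[_ hy'] /andP[_ hz].
  exact: H2 r1 r2 hx hy' hz.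
case: (pickP (fun w => R v w && (w \notin M))) => [w /andP[rvw hwM] | none].
  exists w; split.
    rewrite !inE !negb_or hwM /=; apply/andP; split.
      by apply/negP => /eqP wv; move: rvw; rewrite wv Rirr.
    by apply: (H1 w v) => //; rewrite Rsym.
  apply: Hstep.
    rewrite !inE !negb_or hwM /=; apply/andP; split.
      by apply/negP => /eqP wv; move: rvw; rewrite wv Rirr.
    by apply: (H1 w v) => //; rewrite Rsym.
  move=> y r hy; apply: H2 r rvw hvM hy hwM.
have [w hw] := free_nonempty (negbT hE').
exists w; split => //; apply: Hstep => // y r hy.
by move: (none y); rewrite /= r hy.
Qed.

Lemma breaker_edge k : forall t (M B : {set V}) x y,
  (forall z, z \in M -> z \notin B) -> R x y -> x \in B -> y \in B ->
  breaker_wins adj k t M B.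
Proof.
have nSR : forall (M B : {set V}) x y, (forall z, z \in M -> z \notin B) -> R x y -> x \in B -> y \in B ->
   ~ strong_resolving adj M.
  move=> M B x y hd r hx hy; apply: (HB r).
    by apply/negP => /hd; rewrite hx.
  by apply/negP => /hd; rewrite hy.
elim: k => [|k IH] t M B x y hd r hx hy /=.
  by case: ifP => _; exact: nSR hd r hx hy.
case: ifP => hE; first exact: nSR hd r hx hy.
case: t.
  move=> v hv; apply: IH r hx hy => z; rewrite in_setU1 => /orP[/eqP ->|/hd //].
  by move: hv; rewrite in_setU negb_or => /andP[].
have [v hv] := free_nonempty (negbT hE).
exists v; split => //; apply: (IH _ _ _ x y) => //; rewrite ?in_setU1 ?hx ?hy ?orbT //.
move=> z hz; rewrite in_setU1 negb_or hd // andbT; apply/negP => /eqP zv; subst z.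
by move: hv; rewrite in_setU hz.
Qed.

Lemma breaker_deg2 k (M B : {set V}) v a b :
  (forall z, z \in M -> z \notin B) -> v \notin M :|: B -> a \notin M :|: B -> b \notin M :|: B ->
  a != b -> R v a -> R v b -> breaker_wins adj k false M B.
Proof.
move=> hd hv ha hb ab ra rb.
have nM : forall z (S T : {set V}), z \notin S :|: T -> z \notin S.
  by move=> z S T; rewrite in_setU negb_or => /andP[].
have nB : forall z (S T : {set V}), z \notin S :|: T -> z \notin T.
  by move=> z S T; rewrite in_setU negb_or => /andP[].
have av : a != v by apply/negP => /eqP e1; move: ra; rewrite e1 Rirr.
have bv : b != v by apply/negP => /eqP e1; move: rb; rewrite e1 Rirr.
case: k => [|k] /=.
  by case: ifP => _; exact: HB ra (nM _ _ _ hv) (nM _ _ _ ha).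
case: ifP => hE; first exact: HB ra (nM _ _ _ hv) (nM _ _ _ ha).
exists v; split => //.
case: k => [|k] /=.
  by case: ifP => _; exact: HB ra (nM _ _ _ hv) (nM _ _ _ ha).
case: ifP => hE'.
  exfalso; move/eqP: hE' => hE'.
  have : a \in ~: (M :|: (v |: B)) by rewrite !inE !negb_or (nM _ _ _ ha) av (nB _ _ _ ha).
  by rewrite hE' inE.
move=> w hw.
set c := if w == a then b else a.
have rc : R v c by rewrite /c; case: ifP.
have cw : c != w by rewrite /c; case: ifP => [/eqP ->|/negbT]; rewrite 1?eq_sym.
have cab : c = a \/ c = b by rewrite /c; case: ifP; [right|left].
have cM : c \notin M by case: cab => ->; [apply: nM ha| apply: nM hb].
have cB : c \notin B by case: cab => ->; [apply: nB ha| apply: nB hb].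
have cv : c != v by case: cab => ->.
have cfree : c \notin (w |: M) :|: (v |: B).
  by rewrite !inE !negb_or cw cM cB cv.
have vw : v != w by apply/negP => /eqP e1; move: hw; rewrite -e1 !inE eqxx orbT.
have hvM : v \notin w |: M by rewrite !inE negb_or vw (nM _ _ _ hv).
have hcM : c \notin w |: M by apply: nM cfree.
case: k => [|k] /=.
  by case: ifP => _; exact: HB rc hvM hcM.
case: ifP => hE''; first exact: HB rc hvM hcM.
exists c; split => //.
apply: (@breaker_edge k true _ _ v c _ rc); rewrite ?in_setU1 ?eqxx ?orbT //.
move=> z; rewrite !in_setU1 => /orP[/eqP ->|hz].
  rewrite negb_or eq_sym cw /= negb_or eq_sym.
  by move: hw; rewrite vw !inE !negb_or => /andP[_ /andP[_ ->]].
rewrite !negb_or hd // !andbT; apply/andP; split.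
  by apply/negP => /eqP zc; subst z; move: hcM; rewrite in_setU1 hz orbT.
by apply/negP => /eqP zc; subst z; move: hv; rewrite in_setU hz.
Qed.

Definition deg2 (X : {set V}) := exists v a b,
  [/\ v \notin X, a \notin X, b \notin X & [/\ a != b, R v a & R v b]].
Definition matchX (X : {set V}) := forall x y z, R x y -> R x z ->
  x \notin X -> y \notin X -> z \notin X -> y = z.

Lemma Bgame_maker : matchX set0 -> maker_wins_Bgame adj.
Proof.
move=> hm; apply: (@maker_inv #|V|) => //; first exact: max_card.
Qed.

Lemma Mgame_maker u : matchX [set u] -> maker_wins_Mgame adj.
Proof.
move=> hm; rewrite /maker_wins_Mgame.
have hc : #|V| = #|[set~ u]|.+1 by rewrite cardsC1 prednK //; apply/card_gt0P; exists u.
rewrite hc /=; case: ifP => hE.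
  by move: hE => /eqP/setP/(_ u); rewrite !inE.
exists u; split; first by rewrite !inE.
apply: (@maker_inv #|[set~ u]|) => //.
  by rewrite !setU0.
split; first by move=> *; rewrite inE.
move=> x y z r1 r2; rewrite !inE !orbF => hx hy hz; apply: (hm x y z) => //; by rewrite inE.
Qed.

Lemma Bgame_breaker : deg2 set0 -> breaker_wins_Bgame adj.
Proof.
case=> v [a [b [_ _ _ [ab ra rb]]]].
by apply: (@breaker_deg2 _ _ _ v a b _ _ _ _ ab ra rb) => *; rewrite ?inE.
Qed.

Lemma Mgame_breaker (u0 : V) : (forall u, deg2 [set u]) -> breaker_wins_Mgame adj.
Proof.
move=> hd; rewrite /breaker_wins_Mgame.
have hc : #|V| = #|[set~ u0]|.+1 by rewrite cardsC1 prednK //; apply/card_gt0P; exists u0.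
rewrite hc /=; case: ifP => hE.
  by move: hE => /eqP/setP/(_ u0); rewrite !inE.
move=> u _; have [v [a [b [hv ha hb [ab ra rb]]]]] := hd u.
apply: (@breaker_deg2 _ _ _ v a b _ _ _ _ ab ra rb).
- by move=> *; rewrite inE.
- by move: hv; rewrite !inE !orbF.
- by move: ha; rewrite !inE !orbF.
- by move: hb; rewrite !inE !orbF.
Qed.
End Game.


Section Corona.
Variables (T : finType) (e : rel T).
Hypothesis esym : symmetric e.
Hypothesis eirr : irreflexive e.

Definition Rh (x y : T) : bool :=
  (x != y) && (~~ e x y || [forall w, (w != x) ==> (w != y) ==> (e x w == e y w)]).

Definition RC (u v : option T) : bool :=
  match u, v with Some x, Some y => Rh x y | _, _ => false end.

Local Notation adj := (corona_adj e).

Lemma Rh_sym : symmetric Rh.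
Proof.
move=> x y; rewrite /Rh eq_sym esym; congr (_ && (_ || _)).
by apply/forallP/forallP => h w; have := h w; case: (w != x); case: (w != y) => //=; rewrite eq_sym.
Qed.

Lemma RC_sym : symmetric RC.
Proof. by case=> [x|] [y|] //=; rewrite Rh_sym. Qed.

Lemma RC_irr : irreflexive RC.
Proof. by case=> [x|] //=; rewrite /Rh eqxx. Qed.

Lemma adj_sym : symmetric adj.
Proof. by case=> [x|] [y|] //=; rewrite esym. Qed.

Lemma OG_one (x y z : option T) : adj y z -> y != z -> x \in [:: y; z] ->
  on_geodesic adj x y z.
Proof.
move=> a yz hx; exists [:: z]; split => //=; first by rewrite a.
by case=> [|q1 q] //= _ hl; move: yz; rewrite -hl eqxx.
Qed.

Lemma OG_two (x y m z : option T) : adj y m -> adj m z -> ~~ adj y z -> y != z ->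
  x \in [:: y; m; z] -> on_geodesic adj x y z.
Proof.
move=> a1 a2 na yz hx; exists [:: m; z]; split => //=; first by rewrite a1 a2.
case=> [|q1 [|q2 q]] //=.
- by move=> _ hl; move: yz; rewrite -hl eqxx.
- by rewrite andbT => a3 hl; subst q1; rewrite a3 in na.
Qed.

Lemma OG_end (x y : option T) : x != y -> on_geodesic adj x y x.
Proof.
move=> xy; have yx : y != x by rewrite eq_sym.
case a: (adj y x).
  by apply: OG_one => //; rewrite !inE eqxx orbT.
apply: (@OG_two x y None x) => //.
- by move: xy a; case: y {yx} => [y|] //; case: x => [x|].
- by move: xy a; case: y {yx} => [y|]; case: x => [x|].
- by rewrite a.
- by rewrite !inE eqxx !orbT.
Qed.

Lemma RC_not_OG (u v z : option T) : RC u v -> z != u -> z != v -> ~ on_geodesic adj u v z.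
Proof.
case: u v => [x|] [y|] //= r zu zv [p [pp pl pin pmin]].
have zSy : z != Some y by [].
have hsz : size p <= 2.
  case: z zu zv zSy pl pmin => [w|] zu zv _ pl pmin.
    by apply: (pmin [:: None; Some w]).
  by apply: leq_trans (pmin [:: None] _ _) _.
case: p pp pl pin pmin hsz => [|a [|b [|c p]]] //=.
- by move=> _ hl; move: zv; rewrite -hl eqxx.
- move=> _ hl; subst a; rewrite !inE => /orP[|/eqP hh]; last by move: zu; rewrite hh eqxx.
  by move/eqP=> [] xy; move: r; rewrite /Rh xy eqxx.
move=> /andP[a1 /andP[a2 _]] hl; subst b; rewrite !inE => hin pmin _.
have ha : a = Some x.
  case/or3P: hin => /eqP hh.
  - by move: r; case: hh => ->; rewrite /Rh eqxx.
  - by [].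
  - by move: zu; rewrite hh eqxx.
subst a.
case az: (adj (Some y) z).
  have hp : path adj (Some y) [:: z] by apply/andP; split.
  by have := pmin _ hp erefl.
move: r; rewrite /Rh => /andP[_ /orP[]].
  by move: a1; rewrite /= esym => ->.
move/forallP => tw.
case: z zu zv zSy a2 az {pmin hin} => [w|] //= zu zv _ a2 az.
have := tw w; rewrite zu zv /= a2 => /eqP hh.
by rewrite -hh in az.
Qed.

Lemma HB_corona (M : {set option T}) u v : RC u v -> u \notin M -> v \notin M ->
  ~ strong_resolving adj M.
Proof.
move=> r hu hv sr.
have uv : u != v by apply/negP => /eqP h; move: r; rewrite h RC_irr.
have [z hz [og|og]] := sr u v uv.
- apply: (RC_not_OG r _ _ og).
  + by apply/negP => /eqP h; move: hu; rewrite -h hz.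
  + by apply/negP => /eqP h; move: hv; rewrite -h hz.
- have r' : RC v u by rewrite RC_sym.
  apply: (RC_not_OG r' _ _ og).
  + by apply/negP => /eqP h; move: hv; rewrite -h hz.
  + by apply/negP => /eqP h; move: hu; rewrite -h hz.
Qed.

Hypothesis nonnb : forall x : T, exists y, (y != x) && ~~ e x y.

Lemma HA_corona (M : {set option T}) :
  (forall x y, RC x y -> x \in M \/ y \in M) -> strong_resolving adj M.
Proof.
move=> hc x y xy.
case: (boolP (x \in M)) => hx; first by exists x => //; left; exact: OG_end.
case: (boolP (y \in M)) => hy; first by exists y => //; right; apply: OG_end; rewrite eq_sym.
have noneC : forall v, Some v \notin M -> exists2 z, z \in M & on_geodesic adj None (Some v) z.
  move=> v hv; have [w /andP[wv nvw]] := nonnb v.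
  have r : RC (Some v) (Some w) by rewrite /= /Rh eq_sym wv nvw.
  have hw : Some w \in M by case: (hc _ _ r) => // h; rewrite h in hv.
  exists (Some w) => //; apply: (@OG_two None (Some v) None (Some w)) => //.
  by apply/negP => /eqP [] h; move: wv; rewrite h eqxx.
case: x y xy hx hy => [a|] [b|] //= xy hx hy; last first.
- by have [z hz og] := noneC b hy; exists z => //; left.
- by have [z hz og] := noneC a hx; exists z => //; right.
have nr : ~~ Rh a b.
  apply/negP => r.
  by case: (hc (Some a) (Some b) r) => h; [rewrite h in hx | rewrite h in hy].
have ab : a != b by apply/negP => /eqP h; move: xy; rewrite h eqxx.
move: nr; rewrite /Rh ab /= negb_or negbK => /andP[eab /forallPn[w]].
rewrite !negb_imply => /andP[wa /andP[wb ne]].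
case ea: (e a w); case eb: (e b w); rewrite ea eb // in ne.
- have r : Rh b w by rewrite /Rh eq_sym wb eb.
  have hw : Some w \in M by case: (hc (Some b) (Some w) r) => // h; rewrite h in hy.
  exists (Some w) => //; left; apply: (@OG_two (Some a) (Some b) (Some a) (Some w)) => //=.
  + by rewrite esym.
  + by rewrite eb.
  + by rewrite eq_sym.
  + by rewrite !inE eqxx orbT.
- have r : Rh a w by rewrite /Rh eq_sym wa ea.
  have hw : Some w \in M by case: (hc (Some a) (Some w) r) => // h; rewrite h in hx.
  exists (Some w) => //; right; apply: (@OG_two (Some b) (Some a) (Some b) (Some w)) => //=.
  + by rewrite ea.
  + by rewrite eq_sym.
  + by rewrite !inE eqxx orbT.
Qed.
End Corona.


Lemma four_gt3 (X : finType) (A : {set X}) a b c d :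
  a \in A -> b \in A -> c \in A -> d \in A ->
  a != b -> a != c -> a != d -> b != c -> b != d -> c != d -> 3 < #|A|.
Proof.
move=> ha hb hc hd ab ac ad bc bd cd.
rewrite (cardsD1 a) ha add1n ltnS; apply/card_gt2P; exists b, c, d.
by rewrite !inE hb hc hd eq_sym ab eq_sym ac eq_sym ad bc cd eq_sym bd.
Qed.

Lemma three_gt2 (X : finType) (A : {set X}) a b c :
  a \in A -> b \in A -> c \in A -> a != b -> a != c -> b != c -> 2 < #|A|.
Proof.
move=> ha hb hc ab ac bc; apply/card_gt2P; exists a, b, c.
by rewrite ha hb hc ab bc eq_sym ac.
Qed.

Section Comb.
Variables (T : finType) (e : rel T).
Hypothesis esym : symmetric e.
Hypothesis eirr : irreflexive e.

Lemma conn_sym x y : connect e x y = connect e y x.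
Proof. exact: (sym_connect_sym esym). Qed.

Lemma conn_trans_n x y z : connect e x y -> ~~ connect e x z -> ~~ connect e y z.
Proof. by move=> cxy; apply: contra => cyz; apply: connect_trans cxy cyz. Qed.

Definition Cl x := [set y | connect e x y].


Lemma Cl_eq x y : (Cl x == Cl y) = connect e x y.
Proof.
apply/eqP/idP => [h|cxy].
  have : y \in Cl y by rewrite inE connect0.
  by rewrite -h inE.
apply/setP => z; rewrite !inE; apply/idP/idP => h.
  by apply: connect_trans h; rewrite conn_sym.
exact: connect_trans cxy h.
Qed.

Lemma inS x : Cl x \in [set Cl y | y : T].
Proof. by apply/imsetP; exists x. Qed.

Lemma ncomp2 : 2 <= ncomp e -> exists x y, ~~ connect e x y.
Proof.
rewrite /ncomp => /card_gt1P[A [B [/imsetP[x _ ->] /imsetP[y _ ->]]]].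
by rewrite Cl_eq => h; exists x, y.
Qed.

Lemma ncomp3 : 3 <= ncomp e ->
  exists x y z, [/\ ~~ connect e x y, ~~ connect e y z & ~~ connect e x z].
Proof.
rewrite /ncomp => /card_gt2P[A [B [C [[/imsetP[x _ ->] /imsetP[y _ ->] /imsetP[z _ ->]]]]]].
rewrite !Cl_eq => -[h1 h2 h3]; exists x, y, z; split => //; by rewrite conn_sym.
Qed.

Lemma ncomp4 : 4 <= ncomp e ->
  exists x y z w, [/\ ~~ connect e x y, ~~ connect e x z, ~~ connect e x w &
     [/\ ~~ connect e y z, ~~ connect e y w & ~~ connect e z w]].
Proof.
rewrite /ncomp => h.
have [A hA] : exists A, A \in [set Cl y | y : T].
  by apply/card_gt0P; apply: leq_trans h.
move: h; rewrite (cardsD1 A) hA add1n ltnS.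
move=> /card_gt2P[B [C [D [[hB hC hD] [bc cd db]]]]].
move: hA hB hC hD; rewrite !inE => /imsetP[x _ ->] /andP[xb /imsetP[y _ hy]].
move=> /andP[xc /imsetP[z _ hz]] /andP[xd /imsetP[w _ hw]].
subst B C D; move: xb xc xd bc cd db; rewrite !Cl_eq => h1 h2 h3 h4 h5 h6.
exists x, y, z, w; rewrite ![connect e x _]conn_sym [connect e y w]conn_sym; split => //.
Qed.

Lemma ncomp_eq2 x y : ncomp e = 2 -> ~~ connect e x y -> forall z, connect e x z || connect e y z.
Proof.
move=> hn nxy z; apply/negPn/negP; rewrite negb_or => /andP[nxz nyz].
have : 2 < ncomp e.
  rewrite /ncomp; apply: (three_gt2 (inS x) (inS y) (inS z)); by rewrite Cl_eq.
by rewrite hn.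
Qed.

Lemma ncomp_eq3 x y z : ncomp e = 3 -> ~~ connect e x y -> ~~ connect e y z -> ~~ connect e x z ->
  forall w, [|| connect e x w, connect e y w | connect e z w].
Proof.
move=> hn nxy nyz nxz w; apply/negPn/negP; rewrite !negb_or => /and3P[nxw nyw nzw].
have : 3 < ncomp e.
  rewrite /ncomp; apply: (four_gt3 (inS x) (inS y) (inS z) (inS w)); by rewrite Cl_eq.
by rewrite hn.
Qed.
End Comb.


Lemma Some_eq (X : eqType) (x y : X) : (Some x == Some y) = (x == y).
Proof. by []. Qed.

Section Main.
Variables (T : finType) (e : rel T).
Hypothesis Hsym : symmetric e.
Hypothesis eirr : irreflexive e.

Definition D2ex (u : option T) := exists v a b : T,
  [/\ Some v != u, Some a != u, Some b != u & [/\ a != b, Rh e v a & Rh e v b]].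
Definition matchT (u : option T) := forall x y z : T, Rh e x y -> Rh e x z ->
  Some x != u -> Some y != u -> Some z != u -> y = z.

Lemma nconn_neq x y : ~~ connect e x y -> x != y.
Proof. by apply: contra => /eqP ->; rewrite connect0. Qed.

Lemma nconn_Rh x y : ~~ connect e x y -> Rh e x y.
Proof.
move=> h; rewrite /Rh nconn_neq //=; apply/orP; left.
by apply: contra h => /connect1.
Qed.

Lemma D2_core u v a b : ~~ connect e v a -> ~~ connect e v b -> a != b ->
  Some v != u -> Some a != u -> Some b != u -> D2ex u.
Proof. by move=> h1 h2 ab hv ha hb; exists v, a, b; split => //; split => //; apply: nconn_Rh. Qed.

Lemma ncomp4_D2 : 4 <= ncomp e -> forall u, D2ex u.
Proof.
move=> /(ncomp4 Hsym)[x [y [z [w [h1 h2 h3 [h4 h5 h6]]]]]] u.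
have n1 := nconn_neq h1; have n2 := nconn_neq h2; have n3 := nconn_neq h3.
have n4 := nconn_neq h4; have n5 := nconn_neq h5; have n6 := nconn_neq h6.
case: (eqVneq (Some x) u) => [<-|ux].
  by apply: (D2_core (v:=y) (a:=z) (b:=w)); rewrite // Some_eq eq_sym.
case: (eqVneq (Some y) u) => [<-|uy].
  by apply: (D2_core (v:=x) (a:=z) (b:=w)); rewrite // Some_eq // eq_sym.
case: (eqVneq (Some z) u) => [<-|uz].
  by apply: (D2_core (v:=x) (a:=y) (b:=w)); rewrite // Some_eq // eq_sym.
by apply: (D2_core (v:=x) (a:=y) (b:=z)).
Qed.

Lemma iso_edgeless k : (forall x y, e x y = false) -> #|T| = k -> isomorphic e (edgeless k).
Proof.
move=> h hk; exists (fun x => cast_ord hk (enum_rank x)); split.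
  exists (fun i => enum_val (cast_ord (esym hk) i)) => x /=.
    by rewrite cast_ordK enum_rankK.
  by rewrite enum_valK cast_ordKV.
by move=> x y; rewrite h.
Qed.

Lemma iso_edgeless_inv k : isomorphic e (edgeless k) -> (forall x y, e x y = false) /\ #|T| = k.
Proof.
case=> f [bf hf]; split; first by move=> x y; rewrite -hf.
by rewrite (bij_eq_card bf) card_ord.
Qed.

Lemma Rh_neq x y : Rh e x y -> x != y.
Proof. by case/andP. Qed.

Lemma ncomp3_D2None : 3 <= ncomp e -> D2ex None.
Proof.
move=> /(ncomp3 Hsym)[x [y [z [h1 h2 h3]]]].
by apply: (D2_core (v:=x) (a:=y) (b:=z)) => //; apply: nconn_neq.
Qed.

Lemma sub3 p q r w : ~~ connect e p q -> ~~ connect e q r -> ~~ connect e p r ->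
  w != p -> connect e p w -> forall u, D2ex u.
Proof.
move=> pq qr pr wp cpw u.
have qp : ~~ connect e q p by rewrite (conn_sym Hsym).
have rq : ~~ connect e r q by rewrite (conn_sym Hsym).
have rp : ~~ connect e r p by rewrite (conn_sym Hsym).
have wq : ~~ connect e w q by apply: conn_trans_n cpw pq.
have wr : ~~ connect e w r by apply: conn_trans_n cpw pr.
have qw : ~~ connect e q w by rewrite (conn_sym Hsym).
have rw : ~~ connect e r w by rewrite (conn_sym Hsym).
have n1 := nconn_neq pq; have n2 := nconn_neq qr; have n3 := nconn_neq pr.
have n4 := nconn_neq wq; have n5 := nconn_neq wr.
case: (eqVneq (Some q) u) => [<-|uq].
  apply: (D2_core (v:=r) (a:=p) (b:=w)); rewrite // ?Some_eq // 1?eq_sym //.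
case: (eqVneq (Some r) u) => [<-|ur].
  apply: (D2_core (v:=q) (a:=p) (b:=w)); rewrite // ?Some_eq // 1?eq_sym //.
case: (eqVneq (Some p) u) => [<-|up].
  apply: (D2_core (v:=q) (a:=r) (b:=w)); rewrite // ?Some_eq // 1?eq_sym //.
apply: (D2_core (v:=q) (a:=r) (b:=p)); rewrite // ?Some_eq // 1?eq_sym //.
Qed.

Lemma card3_le (a b c : T) : #|[set a; b; c]| <= 3.
Proof.
rewrite cardsU cards1 cards2; apply: leq_trans (leq_subr _ _) _; by case: (a != b).
Qed.

Lemma ncomp3_notiso : ncomp e = 3 -> ~ isomorphic e (edgeless 3) -> forall u, D2ex u.
Proof.
move=> hn niso.
have [x [y [z [h1 h2 h3]]]] : exists x y z, [/\ ~~ connect e x y, ~~ connect e y z & ~~ connect e x z].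
  by apply: ncomp3 => //; rewrite hn.
case: (pickP (fun w => [&& w != x, w != y & w != z])) => [w /and3P[wx wy wz] | none].
  have := ncomp_eq3 Hsym hn h1 h2 h3 w; case/or3P => c.
  - exact: (sub3 h1 h2 h3 wx c).
  - apply: (sub3 (p:=y) (q:=x) (r:=z) _ _ _ wy c); by rewrite // (conn_sym Hsym).
  - apply: (sub3 (p:=z) (q:=x) (r:=y) _ _ _ wz c); by rewrite // (conn_sym Hsym).
exfalso; apply: niso; apply: iso_edgeless.
  move=> p q; apply/negP => epq.
  have hp : [|| p == x, p == y | p == z] by move: (none p) => /= /negbT; rewrite !negb_and !negbK.
  have hq : [|| q == x, q == y | q == z] by move: (none q) => /= /negbT; rewrite !negb_and !negbK.
  have key : p = q.
    move: (connect1 epq); case/or3P: hp => /eqP ->; case/or3P: hq => /eqP -> c //;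
    by move: c; rewrite ?(negbTE h1) ?(negbTE h2) ?(negbTE h3) // (conn_sym Hsym) ?(negbTE h1) ?(negbTE h2) ?(negbTE h3).
  by rewrite key eirr in epq.
apply/eqP; rewrite eqn_leq; apply/andP; split.
  apply: leq_trans (card3_le x y z); apply: subset_leq_card; apply/subsetP => p _.
  by move: (none p) => /= /negbT; rewrite !negb_and !negbK !inE -orbA.
rewrite -cardsT; apply: (three_gt2 (a:=x) (b:=y) (c:=z)); rewrite ?inE //; exact: nconn_neq.
Qed.

Lemma iso3_match : isomorphic e (edgeless 3) -> exists u, matchT u.
Proof.
move/iso_edgeless_inv => [_ hc].
have [t _] : exists t : T, t \in T by apply/card_gt0P; rewrite hc.
exists (Some t) => x y z rxy rxz hx hy hz.
apply/eqP/negPn/negP => yz.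
have : 3 < #|[set: T]|.
  apply: (four_gt3 (a:=x) (b:=y) (c:=z) (d:=t)); rewrite ?inE //; first exact: Rh_neq rxy.
  - exact: Rh_neq rxz.
by rewrite cardsT hc.
Qed.

Lemma iso2_match : isomorphic e (edgeless 2) -> matchT None.
Proof.
move/iso_edgeless_inv => [_ hc] x y z rxy rxz _ _ _.
apply/eqP/negPn/negP => yz.
have : 2 < #|[set: T]|.
  apply: (three_gt2 (a:=x) (b:=y) (c:=z)); rewrite ?inE //; first exact: Rh_neq rxy.
  exact: Rh_neq rxz.
by rewrite cardsT hc.
Qed.

Lemma two_out : 2 < #|T| -> forall x y : T, exists w, (w != x) && (w != y).
Proof.
move=> h x y; case: (pickP (fun w => (w != x) && (w != y))) => [w hw|none]; first by exists w.
exfalso; move: h; apply/negP; rewrite -leqNgt.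
apply: leq_trans (_ : #|[set x; y]| <= 2); last by rewrite cards2; case: (_ != _).
rewrite -cardsT; apply: subset_leq_card; apply/subsetP => p _.
by move: (none p) => /= /negbT; rewrite negb_and !negbK !inE.
Qed.

Lemma three_out : 3 < #|T| -> forall x y z : T, exists w, [&& w != x, w != y & w != z].
Proof.
move=> h x y z; case: (pickP (fun w => [&& w != x, w != y & w != z])) => [w hw|none]; first by exists w.
exfalso; move: h; apply/negP; rewrite -leqNgt.
apply: leq_trans (card3_le x y z).
rewrite -cardsT; apply: subset_leq_card; apply/subsetP => p _.
by move: (none p) => /= /negbT; rewrite !negb_and !negbK !inE -orbA.
Qed.

Lemma all3 a b c : #|T| = 3 -> a != b -> a != c -> b != c -> forall w : T, [|| w == a, w == b | w == c].
Proof.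
move=> h ab ac bc w; apply/negPn/negP; rewrite !negb_or => /and3P[wa wb wc].
have : 3 < #|[set: T]|.
  by apply: (four_gt3 (a:=a) (b:=b) (c:=c) (d:=w)); rewrite ?inE // eq_sym.
by rewrite cardsT h.
Qed.

Lemma all4 a b c d : #|T| = 4 -> a != b -> a != c -> a != d -> b != c -> b != d -> c != d ->
  forall w : T, [|| w == a, w == b, w == c | w == d].
Proof.
move=> h ab ac ad bc bd cd w; apply/negPn/negP; rewrite !negb_or => /and4P[wa wb wc wd].
have : 4 < #|[set: T]|.
  rewrite (cardsD1 w) inE add1n ltnS.
  apply: (four_gt3 (a:=a) (b:=b) (c:=c) (d:=d)); by rewrite ?inE // ?(eq_sym a w) ?(eq_sym b w) ?(eq_sym c w) ?(eq_sym d w) ?wa ?wb ?wc ?wd.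
by rewrite cardsT h.
Qed.

Lemma ncomp2_card : ncomp e = 2 -> ~ isomorphic e (edgeless 2) -> 2 < #|T|.
Proof.
move=> hn ni.
have [x [y nxy]] : exists x y, ~~ connect e x y by apply: ncomp2 => //; rewrite hn.
case: (pickP (fun w => (w != x) && (w != y))) => [w /andP[wx wy]|none].
  rewrite -cardsT; apply: (three_gt2 (a:=x) (b:=y) (c:=w)); rewrite ?inE //; [exact: nconn_neq | by rewrite eq_sym | by rewrite eq_sym].
exfalso; apply: ni; apply: iso_edgeless.
  move=> p q; apply/negP => epq.
  have hp : (p == x) || (p == y) by move: (none p) => /= /negbT; rewrite !negb_and !negbK.
  have hq : (q == x) || (q == y) by move: (none q) => /= /negbT; rewrite !negb_and !negbK.
  have key : p = q.
    move: (connect1 epq); case/orP: hp => /eqP ->; case/orP: hq => /eqP -> c //;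
    by move: c; rewrite ?(negbTE nxy) // (conn_sym Hsym) ?(negbTE nxy).
  by rewrite key eirr in epq.
apply/eqP; rewrite eqn_leq; apply/andP; split.
  apply: leq_trans (_ : #|[set x; y]| <= 2); last by rewrite cards2; case: (_ != _).
  rewrite -cardsT; apply: subset_leq_card; apply/subsetP => p _.
  by move: (none p) => /= /negbT; rewrite !negb_and !negbK !inE.
apply/card_gt1P; exists x, y; split => //; exact: nconn_neq.
Qed.

Lemma ncomp2_D2None : ncomp e = 2 -> 2 < #|T| -> D2ex None.
Proof.
move=> hn h3.
have [x [y nxy]] : exists x y, ~~ connect e x y by apply: ncomp2 => //; rewrite hn.
have [w /andP[wx wy]] := two_out h3 x y.
case/orP: (ncomp_eq2 Hsym hn nxy w) => c.
  apply: (D2_core (v:=y) (a:=x) (b:=w)) => //; rewrite 1?eq_sym //.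
  - by rewrite (conn_sym Hsym).
  - by rewrite (conn_sym Hsym); apply: conn_trans_n c nxy.
apply: (D2_core (v:=x) (a:=y) (b:=w)) => //; rewrite 1?eq_sym //.
by rewrite (conn_sym Hsym); apply: conn_trans_n c _; rewrite (conn_sym Hsym).
Qed.

Lemma conn_edge b c : connect e b c -> b != c -> exists z, e b z.
Proof.
move/connectP => [p hp hl]; case: p hp hl => [|z p] /=.
  by move=> _ ->; rewrite eqxx.
by move=> /andP[ebz _] _ _; exists z.
Qed.

Lemma isol_conn w z : (forall y, e w y = false) -> connect e w z -> z = w.
Proof.
move=> hi c; case: (eqVneq z w) => // zw.
have wz : w != z by rewrite eq_sym.
by have [y] := conn_edge c wz; rewrite hi.
Qed.

Lemma L_nomatch u p p' q q' : p != p' -> connect e p p' -> q != q' -> connect e q q' ->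
  ~~ connect e p q -> (forall w, u = Some w -> connect e p w) -> ~ matchT u.
Proof.
move=> pp' cp qq' cq npq hu hm.
set v := if Some p == u then p' else p.
have cv : connect e p v by rewrite /v; case: ifP => _; rewrite ?connect0.
have nvq : ~~ connect e v q by apply: conn_trans_n cv npq.
have nvq' : ~~ connect e v q'.
  apply/negP => c; move/negP: nvq; apply; apply: connect_trans c _; by rewrite (conn_sym Hsym).
suff hqq : q = q' by rewrite hqq eqxx in qq'.
apply: (hm v q q'); try exact: nconn_Rh.
- rewrite /v; case: ifP => [/eqP <-|/negbT //]; by rewrite Some_eq eq_sym.
- apply/negP => /eqP /esym hq; move: (hu q hq) => c; by rewrite c in npq.
- apply/negP => /eqP /esym hq; move: (hu q' hq) => c; move/negP: npq; apply.
  by apply: connect_trans c _; rewrite (conn_sym Hsym).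
Qed.

Lemma isolated_split u : ncomp e = 2 -> matchT u ->
  exists a, (forall w, e a w = false) /\ (forall w w', w != a -> w' != a -> connect e w w').
Proof.
move=> hn hm.
have [x [y nxy]] : exists x y, ~~ connect e x y by apply: ncomp2 => //; rewrite hn.
have nyx : ~~ connect e y x by rewrite (conn_sym Hsym).
have hn' : ncomp e = 2 := hn.
have sing : forall p q, ~~ connect e p q -> (forall z, connect e p z || connect e q z) ->
    (forall p', connect e p p' -> p' = p) ->
    exists a, (forall w, e a w = false) /\ (forall w w', w != a -> w' != a -> connect e w w').
  move=> p q npq hpq hs; exists p; split.
    by move=> w; apply/negP => epw; move: (hs w (connect1 epw)) => h; rewrite h eirr in epw.
  move=> w w' wp w'p.
  have cw : connect e q w.
    by case/orP: (hpq w) => // c; rewrite (hs _ c) eqxx in wp.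
  have cw' : connect e q w'.
    by case/orP: (hpq w') => // c; rewrite (hs _ c) eqxx in w'p.
  by apply: connect_trans cw'; rewrite (conn_sym Hsym).
case: (pickP (fun x' => (x' != x) && connect e x x')) => [x' /andP[x'x cx']|nx]; last first.
  apply: (sing x y nxy (ncomp_eq2 Hsym hn nxy)) => p' c.
  by apply/eqP; move: (nx p') => /=; rewrite c andbT => /negbT; rewrite negbK.
case: (pickP (fun y' => (y' != y) && connect e y y')) => [y' /andP[y'y cy']|ny]; last first.
  apply: (sing y x nyx) => [z|p' c].
    by rewrite orbC; exact: (ncomp_eq2 Hsym hn nxy z).
  by apply/eqP; move: (ny p') => /=; rewrite c andbT => /negbT; rewrite negbK.
exfalso.
case hu: u => [w|]; last first.
  by apply: (L_nomatch (p:=x) (p':=x') (q:=y) (q':=y') _ cx' _ cy' nxy _ hm); rewrite 1?eq_sym // hu.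
case/orP: (ncomp_eq2 Hsym hn nxy w) => c.
  apply: (L_nomatch (p:=x) (p':=x') (q:=y) (q':=y') _ cx' _ cy' nxy _ hm); rewrite 1?eq_sym //.
  by move=> w0; rewrite hu => -[<-].
apply: (L_nomatch (p:=y) (p':=y') (q:=x) (q':=x') _ cy' _ cx' nyx _ hm); rewrite 1?eq_sym //.
by move=> w0; rewrite hu => -[<-].
Qed.

Lemma iso_K1K2 a b c : a != b -> a != c -> b != c ->
  (forall w : T, [|| w == a, w == b | w == c]) ->
  (forall w, e a w = false) -> e b c -> isomorphic e (gunion (edgeless 1) (complete 2)).
Proof.
move=> ab ac bc hall hi ebc.
have ba : (b == a) = false by rewrite eq_sym; apply: negbTE.
have ca : (c == a) = false by rewrite eq_sym; apply: negbTE.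
have cb : (c == b) = false by rewrite eq_sym; apply: negbTE.
have hi' : forall w, e w a = false by move=> w; rewrite Hsym.
have ecb : e c b by rewrite Hsym.
pose f (x : T) : ('I_1 + 'I_2)%type :=
  if x == a then inl ord0 else if x == b then inr ord0 else inr ord_max.
pose g (s : ('I_1 + 'I_2)%type) : T :=
  match s with inl _ => a | inr i => if i == ord0 then b else c end.
exists f; split.
  exists g.
    by move=> x; case/or3P: (hall x) => /eqP ->; rewrite /f /g ?eqxx ?ba ?ca ?cb.
  case => [i|i]; first by rewrite /g /f eqxx ord1.
  rewrite /g; case: (eqVneq i ord0) => [->|ni]; rewrite /f ?ba ?eqxx // ca cb.
  by congr inr; apply/val_inj; case: i ni => [[|[|k]] hk] //= _.
move=> x y; case/or3P: (hall x) => /eqP ->; case/or3P: (hall y) => /eqP ->;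
  rewrite /f ?eqxx ?ba ?ca ?cb /= ?hi ?hi' ?eirr ?ebc ?ecb //.
Qed.

Lemma iso_K1P3 a p c q : a != p -> a != c -> a != q -> p != c -> p != q -> c != q ->
  (forall w : T, [|| w == a, w == p, w == c | w == q]) ->
  (forall w, e a w = false) -> e p c -> e c q -> ~~ e p q ->
  isomorphic e (gunion (edgeless 1) (pathg 3)).
Proof.
move=> ap ac aq pc pq cq hall hi epc ecq npq.
have pa : (p == a) = false by rewrite eq_sym; apply: negbTE.
have ca : (c == a) = false by rewrite eq_sym; apply: negbTE.
have qa : (q == a) = false by rewrite eq_sym; apply: negbTE.
have cp : (c == p) = false by rewrite eq_sym; apply: negbTE.
have qp : (q == p) = false by rewrite eq_sym; apply: negbTE.
have qc : (q == c) = false by rewrite eq_sym; apply: negbTE.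
have hi' : forall w, e w a = false by move=> w; rewrite Hsym.
have ecp : e c p by rewrite Hsym.
have eqc : e q c by rewrite Hsym.
have eqp : e q p = false by rewrite Hsym; apply: negbTE.
have epq : e p q = false by apply: negbTE.
pose f (x : T) : ('I_1 + 'I_3)%type :=
  if x == a then inl ord0 else if x == p then inr (inord 0)
  else if x == c then inr (inord 1) else inr (inord 2).
pose g (s : ('I_1 + 'I_3)%type) : T :=
  match s with inl _ => a | inr i => if val i == 0 then p else if val i == 1 then c else q end.
exists f; split.
  exists g.
    by move=> x; case/or4P: (hall x) => /eqP ->; rewrite /f /g ?eqxx ?pa ?ca ?qa ?cp ?qp ?qc /= ?inordK.
  case => [i|i]; first by rewrite /g /f eqxx ord1.
  rewrite /g; case: i => [[|[|[|k]]] hk] //=; rewrite /f ?pa ?ca ?qa ?cp ?qp ?qc ?eqxx;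
    by congr inr; apply/val_inj; rewrite /= inordK.
move=> x y; case/or4P: (hall x) => /eqP ->; case/or4P: (hall y) => /eqP ->;
  rewrite /f ?eqxx ?pa ?ca ?qa ?cp ?qp ?qc /= ?hi ?hi' ?eirr ?epc ?ecp ?ecq ?eqc ?eqp ?epq //;
  by rewrite /pathg /= !inordK.
Qed.
End Main.

Section Hstar.
Variables (T : finType) (e : rel T).
Hypothesis Hsym : symmetric e.
Hypothesis eirr : irreflexive e.
Variable a : T.
Hypothesis hi : forall w, e a w = false.
Hypothesis hm : matchT e (Some a).

Local Notation U := {x : T | x != a}.
Definition fU : rel U := fun x y => e (val x) (val y).

Lemma hi' w : e w a = false.
Proof. by rewrite Hsym. Qed.

Lemma nn_unique (w t1 t2 : U) : t1 != w -> t2 != w -> ~~ fU w t1 -> ~~ fU w t2 -> t1 = t2.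
Proof.
move=> t1w t2w n1 n2; apply: val_inj.
have hw : Some (val w) != Some a by rewrite Some_eq (valP w).
apply: (hm (x:=val w)) => //.
- by rewrite /Rh n1 orTb andbT (inj_eq val_inj) eq_sym.
- by rewrite /Rh n2 orTb andbT (inj_eq val_inj) eq_sym.
- by rewrite Some_eq (valP t1).
- by rewrite Some_eq (valP t2).
Qed.

Lemma deg_cases (w : U) :
  (exists t, [/\ t != w, ~~ fU w t & deg fU w = #|{: U}| - 2]) \/
  ((forall y, y != w -> fU w y) /\ deg fU w = #|{: U}| - 1).
Proof.
case: (pickP (fun t => (t != w) && ~~ fU w t)) => [t /andP[tw nt] | none].
  left; exists t; split => //; rewrite /deg.
  have -> : [set y | fU w y] = ~: [set w; t].
    apply/setP => y; rewrite !inE.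
    case: (eqVneq y w) => [->|yw]; first by rewrite /fU eirr.
    case: (eqVneq y t) => [->|yt]; first by rewrite (negbTE nt).
    apply/negPn/negP => ny.
    by move: yt; rewrite (nn_unique yw tw ny nt) eqxx.
  by rewrite -(cardsC [set w; t]) cards2 eq_sym tw addKn.
right; split.
  by move=> y yw; move: (none y) => /= /negbT; rewrite negb_and yw /= negbK.
rewrite /deg.
have -> : [set y | fU w y] = [set~ w].
  apply/setP => y; rewrite !inE.
  case: (eqVneq y w) => [->|yw]; first by rewrite /fU eirr.
  by move: (none y) => /= /negbT; rewrite negb_and yw /= negbK.
by rewrite cardsC1 subn1.
Qed.

Lemma Hstar_case : 4 < #|T| -> K1_union_Hstar e.
Proof.
move=> h5.
have cU : #|{: U}| = #|T|.-1 by rewrite card_sig cardC1.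
have m4 : 4 <= #|{: U}| by rewrite cU -ltnS prednK // (leq_trans _ h5).
have univ : forall w : U, deg fU w = #|{: U}| - 1 -> forall y, y != w -> fU w y.
  move=> w dw; case: (deg_cases w) => [[t [_ _ d2]]|[] //].
  by move: dw; rewrite d2; lia.
exists (Finite.clone {x : T | x != a} _), fU; split.
- by move=> x y; rewrite /fU Hsym.
- by move=> x; rewrite /fU eirr.
- move=> x y; case: (eqVneq x y) => [->|xy]; first exact: connect0.
  case fxy: (fU x y); first exact: connect1.
  have [z /andP[zx zy]] := two_out (leq_trans (isT : 2 < 4) m4) x y.
  have fxz : fU x z.
    apply/negPn/negP => nz; move: zy.
    by rewrite (nn_unique zx (_ : y != x) nz (negbT fxy)) ?eqxx // eq_sym.
  have fzy : fU z y.
    rewrite /fU Hsym; apply/negPn/negP => nz; move: zx.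
    have nyx : ~~ fU y x by rewrite /fU Hsym -/(fU x y) fxy.
    by rewrite (nn_unique zy xy nz nyx) eqxx.
  by apply: connect_trans (connect1 fxz) (connect1 fzy).
- exact: m4.
split.
- move=> w; case: (deg_cases w) => [[t [_ _ ->]]|[_ ->]]; by [left|right].
- rewrite leqNgt; apply/negP => /card_gt2P[w1 [w2 [w3 [[h1 h2 h3] [n12 n23 n31]]]]].
  move: h1 h2 h3; rewrite !inE => /eqP /univ u1 /eqP /univ u2 /eqP /univ u3.
  have twin : forall (p q : U), p != q -> (forall y, y != p -> fU p y) -> (forall y, y != q -> fU q y) ->
      Rh e (val p) (val q).
    move=> p q pq up uq; rewrite /Rh (inj_eq val_inj) pq /=; apply/orP; right.
    apply/forallP => w; apply/implyP => wp; apply/implyP => wq.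
    case: (eqVneq w a) => [->|wa]; first by rewrite !hi'.
    have := up (Sub w wa); have := uq (Sub w wa); rewrite /fU /=.
    rewrite -!(inj_eq val_inj) /= wp wq => -> // ->//.
  have r12 := twin _ _ n12 u1 u2.
  have n13 : w1 != w3 by rewrite eq_sym.
  have r13 := twin w1 w3 n13 u1 u3.
  have := hm r12 r13; rewrite !Some_eq !(valP w1) !(valP w2) !(valP w3) => /(_ isT isT isT) /val_inj h.
  by rewrite h eqxx in n23.
pose h (x : T) : ('I_1 + U)%type := match insub x with Some u => inr u | None => inl ord0 end.
exists h; split.
  exists (fun s => match s with inl _ => a | inr u => val u end).
    move=> x; rewrite /h; case: insubP => [u _ <- //|].
    by rewrite negbK => /eqP ->.
  case => [i|u]; rewrite /h.
    by rewrite insubF ?eqxx // ord1.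
  by rewrite valK.
move=> x y; rewrite /h.
case: insubP => [u _ xu|nx]; case: insubP => [v _ yv|ny] /=.
- by rewrite -xu -yv.
- by move/negbNE/eqP: ny => ->; rewrite hi'.
- by move/negbNE/eqP: nx => ->; rewrite hi.
- by move/negbNE/eqP: nx => ->; rewrite hi.
Qed.
End Hstar.

Section HstarM.
Variables (U : finType) (f : rel U).
Hypothesis fsym : symmetric f.
Hypothesis firr : irreflexive f.
Hypothesis m4 : 4 <= #|U|.
Hypothesis hdeg : forall w, deg f w = #|U| - 2 \/ deg f w = #|U| - 1.
Hypothesis huniv : #|[set w | deg f w == #|U| - 1]| <= 2.

Lemma nn_uniq w t1 t2 : t1 != w -> t2 != w -> ~~ f w t1 -> ~~ f w t2 -> t1 = t2.
Proof.
move=> t1w t2w n1 n2; apply/eqP/negPn/negP => t12.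
have sub : [set y | f w y] \subset ~: [set w; t1; t2].
  apply/subsetP => y; rewrite !inE => fy; apply/negP => /orP[/orP[]|] /eqP hy; subst y.
  - by rewrite firr in fy.
  - by rewrite fy in n1.
  - by rewrite fy in n2.
have c3 : 2 < #|[set w; t1; t2]|.
  by apply: (three_gt2 (a:=w) (b:=t1) (c:=t2)); rewrite ?inE ?eqxx ?orbT // eq_sym.
have := subset_leq_card sub; rewrite -/(deg f w).
have := cardsC [set w; t1; t2].
by case: (hdeg w) => ->; lia.
Qed.

Lemma univ_of w : deg f w = #|U| - 1 -> forall y, y != w -> f w y.
Proof.
move=> dw y yw; apply/negPn/negP => ny.
have sub : [set y | f w y] \subset ~: [set w; y].
  apply/subsetP => z; rewrite !inE => fz; apply/negP => /orP[] /eqP hz; subst z.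
  - by rewrite firr in fz.
  - by rewrite fz in ny.
have := subset_leq_card sub; rewrite -/(deg f w) dw.
have := cardsC [set w; y]; rewrite cards2 eq_sym yw.
lia.
Qed.

Lemma of_univ w : (forall y, y != w -> f w y) -> deg f w = #|U| - 1.
Proof.
move=> hu; rewrite /deg.
have -> : [set y | f w y] = [set~ w].
  apply/setP => y; rewrite !inE.
  case: (eqVneq y w) => [->|yw]; first by rewrite firr.
  exact: hu.
by rewrite cardsC1 subn1.
Qed.

Definition twin (x y : U) := [forall w, (w != x) ==> (w != y) ==> (f x w == f y w)].

Lemma twinE x y w : twin x y -> w != x -> w != y -> f x w = f y w.
Proof. by move/forallP/(_ w) => h wx wy; move: h; rewrite wx wy => /eqP. Qed.

Lemma hstar_match x y z : Rh f x y -> Rh f x z -> y = z.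
Proof.
move=> /andP[xy ry] /andP[xz rz]; apply/eqP/negPn/negP => yz.
have yx : y != x by rewrite eq_sym.
have zx : z != x by rewrite eq_sym.
have zy : z != y by rewrite eq_sym.
have mix : forall y z, y != x -> z != x -> y != z -> ~~ f x y -> f x z -> twin x z -> False.
  move=> y' z' y'x z'x y'z' n1 f1 tw.
  have fzy : f z' y' = false by rewrite -(twinE tw) //; apply: negbTE.
  have := nn_uniq (w:=y') (t1:=x) (t2:=z') _ _ _ _.
  rewrite eq_sym y'x eq_sym y'z' fsym n1 fsym fzy => /(_ isT isT isT isT) xz'.
  by move: z'x; rewrite xz' eqxx.
case fy: (f x y); case fz: (f x z).
- have ty : twin x y by case/orP: ry => //; rewrite fy.
  have tz : twin x z by case/orP: rz => //; rewrite fz.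
  have fyz : f y z by rewrite -(twinE ty zx zy).
  case: (pickP (fun t => (t != x) && ~~ f x t)) => [t /andP[tx nt]|none].
    have ty' : t != y by apply/negP => /eqP ht; move: nt; rewrite ht fy.
    have fyt : f y t = false by rewrite -(twinE ty tx ty'); apply: negbTE.
    have := nn_uniq (w:=t) (t1:=x) (t2:=y); rewrite eq_sym tx eq_sym ty' fsym nt fsym fyt.
    by move=> /(_ isT isT isT isT) hxy; rewrite hxy eqxx in xy.
  have ux : forall t, t != x -> f x t.
    by move=> t tx; move: (none t) => /= /negbT; rewrite negb_and tx /= negbK.
  have uy : forall t, t != y -> f y t.
    move=> t ty'; case: (eqVneq t x) => [->|tx]; first by rewrite fsym fy.
    by rewrite -(twinE ty tx ty'); apply: ux.
  have uz : forall t, t != z -> f z t.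
    move=> t tz'; case: (eqVneq t x) => [->|tx]; first by rewrite fsym fz.
    by rewrite -(twinE tz tx tz'); apply: ux.
  have : 2 < #|[set w | deg f w == #|U| - 1]|.
    apply: (three_gt2 (a:=x) (b:=y) (c:=z)) => //; rewrite inE; apply/eqP; exact: of_univ.
  by rewrite ltnNge huniv.
- have ty : twin x y by case/orP: ry => //; rewrite fy.
  by apply: (mix z y zx yx zy); rewrite ?fz ?fy.
- have tz : twin x z by case/orP: rz => //; rewrite fz.
  by apply: (mix y z yx zx yz); rewrite ?fz ?fy.
- by move: yz; rewrite (nn_uniq yx zx (negbT fy) (negbT fz)) eqxx.
Qed.
End HstarM.


Lemma Rh_iso (T1 T2 : finType) (e1 : rel T1) (e2 : rel T2) (f : T1 -> T2) :
  bijective f -> (forall x y, e2 (f x) (f y) = e1 x y) ->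
  forall x y, Rh e1 x y = Rh e2 (f x) (f y).
Proof.
case=> g fg gf hf x y; rewrite /Rh (inj_eq (can_inj fg)) hf; congr (_ && (_ || _)).
apply/forallP/forallP => H w.
  by rewrite -(gf w) !(inj_eq (can_inj fg)) !hf; exact: H.
by have := H (f w); rewrite !(inj_eq (can_inj fg)) !hf.
Qed.

Lemma match_iso (T1 T2 : finType) (e1 : rel T1) (e2 : rel T2) (t2 : T2) :
  isomorphic e1 e2 ->
  (forall x y z : T2, Rh e2 x y -> Rh e2 x z -> x != t2 -> y != t2 -> z != t2 -> y = z) ->
  exists u, matchT e1 u.
Proof.
case=> f [bf hf] hm; have bf' := bf; case: bf' => g fg gf.
exists (Some (g t2)) => x y z rxy rxz hx hy hz.
have ne : forall w, Some w != Some (g t2) -> f w != t2.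
  by move=> w; rewrite Some_eq; apply: contra => /eqP <-; rewrite fg.
apply: (can_inj fg); apply: (hm (f x)); rewrite -?(Rh_iso bf hf) //; exact: ne.
Qed.

Lemma Rh_gunion_inr (U : finType) (f : rel U) x y :
  Rh (gunion (edgeless 1) f) (inr x) (inr y) -> Rh f x y.
Proof.
case/andP => xy r; rewrite /Rh.
have -> : x != y by apply: contra xy => /eqP ->.
case/orP: r => [n|/forallP H]; first by rewrite n.
apply/orP; right; apply/forallP => w; have := H (inr w).
by rewrite /= !(inj_eq (@inr_inj _ _)).
Qed.

Lemma P3_R (i j : 'I_3) : Rh (gunion (edgeless 1) (pathg 3)) (inr i) (inr j) ->
  ((val i == 0) && (val j == 2)) || ((val i == 2) && (val j == 0)).
Proof.
move/Rh_gunion_inr; case: i => [[|[|[|?]]] hi] //; case: j => [[|[|[|?]]] hj] //;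
  rewrite /Rh /= ?andbF //.
all: move/forallP => H.
all: first [ by have := H (inord 2); rewrite /pathg -!(inj_eq val_inj) /= inordK
           | by have := H (inord 0); rewrite /pathg -!(inj_eq val_inj) /= inordK ].
Qed.

Section Final.
Variables (T : finType) (e : rel T).
Hypothesis Hsym : symmetric e.
Hypothesis eirr : irreflexive e.

Lemma card3_match : #|T| = 3 -> exists u, matchT e u.
Proof.
move=> hc.
have [t _] : exists t : T, t \in T by apply/card_gt0P; rewrite hc.
exists (Some t) => x y z rxy rxz hx hy hz.
apply/eqP/negPn/negP => yz.
have : 3 < #|[set: T]|.
  apply: (four_gt3 (a:=x) (b:=y) (c:=z) (d:=t)); rewrite ?inE //; first exact: Rh_neq rxy.
  exact: Rh_neq rxz.
by rewrite cardsT hc.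
Qed.

Lemma caseN2_facts : caseN2 e -> 2 < #|T| /\ exists u, matchT e u.
Proof.
case=> [iso|[iso|hs]].
- have hc : #|T| = 3 by case: iso => f [bf _]; rewrite (bij_eq_card bf) card_sum !card_ord.
  by split; [rewrite hc | exact: card3_match].
- have hc : #|T| = 4 by case: iso => f [bf _]; rewrite (bij_eq_card bf) card_sum !card_ord.
  split; first by rewrite hc.
  apply: (match_iso (t2 := inl ord0) iso).
  case=> [i|i]; first by move=> ? ? ? ?; rewrite (ord1 i) eqxx.
  case=> [j|j]; first by move=> ? ? ? ?; rewrite (ord1 j) eqxx.
  case=> [k|k]; first by move=> ? ? ? ?; rewrite (ord1 k) eqxx.
  move=> /P3_R r1 /P3_R r2 _ _ _; congr inr; apply/val_inj.
  by case/orP: r1 => /andP[/eqP h1 /eqP ->]; case/orP: r2 => /andP[/eqP h2 /eqP ->] //;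
    move: h1 h2 => ->.
- case: hs => U [f [fs fi fc m4 [hd hu iso]]].
  split.
    by case: iso => g [bg _]; rewrite (bij_eq_card bg) card_sum card_ord; move: m4; lia.
  apply: (match_iso (t2 := inl ord0) iso).
  case=> [i|i]; first by move=> ? ? ? ?; rewrite (ord1 i) eqxx.
  case=> [j|j]; first by move=> ? ? ? ?; rewrite (ord1 j) eqxx.
  case=> [k|k]; first by move=> ? ? ? ?; rewrite (ord1 k) eqxx.
  move=> /Rh_gunion_inr r1 /Rh_gunion_inr r2 _ _ _; congr inr.
  exact: (hstar_match fs fi m4 hd hu r1 r2).
Qed.

Lemma c3 : ncomp e = 2 -> ~ isomorphic e (edgeless 2) -> ~ caseN2 e -> forall u, D2ex e u.
Proof.
move=> hn ni nc u; have h3 := ncomp2_card Hsym eirr hn ni.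
apply: NNPP => nd.
have hm : matchT e u.
  move=> x y z rxy rxz hx hy hz; case: (eqVneq y z) => // yz; exfalso; apply: nd.
  by exists x, y, z; split.
have [a [hi hc]] := isolated_split Hsym eirr hn hm.
have hi' : forall w, e w a = false by move=> w; rewrite Hsym.
apply: nc.
have nbr : forall b c, b != a -> c != a -> b != c -> exists z, [&& e b z, z != a & z != b].
  move=> b c ba ca bc; have [z ebz] := conn_edge (hc b c ba ca) bc.
  exists z; rewrite ebz /=; apply/andP; split.
    by apply/negP => /eqP za; rewrite za hi' in ebz.
  by apply/negP => /eqP zb; rewrite zb eirr in ebz.
case: (ltngtP #|T| 3) => [|h4|hc3]; first by rewrite ltnNge h3.
  have hma : matchT e (Some a).
    case: (eqVneq (Some a) u) => [eqa|ua]; first by rewrite eqa.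
    exfalso; pose t := if u is Some t then t else a.
    have [w1 /andP[w1a w1t]] := two_out h3 a t.
    have [w2 /and3P[w2a w2t w21]] := three_out h4 a t w1.
    have r1 : Rh e a w1 by rewrite /Rh eq_sym w1a hi.
    have r2 : Rh e a w2 by rewrite /Rh eq_sym w2a hi.
    have nu : forall w, w != t -> Some w != u.
      by move=> w wt; rewrite /t in wt; case: (u) wt => [t'|] //= wt; rewrite Some_eq.
    by move: w21; rewrite (hm _ _ _ r1 r2 ua (nu _ w1t) (nu _ w2t)) eqxx.
  case: (ltngtP #|T| 4) => [|h5|hc4]; first by rewrite ltnNge h4.
    by right; right; exact: (Hstar_case Hsym eirr hi hma h5).
  right; left.
  have [b1 /andP[b1a _]] := two_out h3 a a.
  have [b2 /andP[b2a b21]] := two_out h3 a b1.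
  have [b3 /and3P[b3a b31 b32]] := three_out h4 a b1 b2.
  have ab1 : a != b1 by rewrite eq_sym.
  have ab2 : a != b2 by rewrite eq_sym.
  have ab3 : a != b3 by rewrite eq_sym.
  have b12 : b1 != b2 by rewrite eq_sym.
  have b13 : b1 != b3 by rewrite eq_sym.
  have b23 : b2 != b3 by rewrite eq_sym.
  have hall := all4 hc4 ab1 ab2 ab3 b12 b13 b23.
  have other : forall p q r, p != a -> q != a -> r != a -> p != q -> p != r ->
      (forall w : T, [|| w == a, w == p, w == q | w == r]) -> e p q || e p r.
    move=> p q r pa qa ra pq pr hw; have [z /and3P[ez za zp]] := nbr p q pa qa pq.
    case/or4P: (hw z) => /eqP hz; subst z.
    - by rewrite eqxx in za.
    - by rewrite eqxx in zp.
    - by rewrite ez.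
    - by rewrite ez orbT.
  have o1 := other b1 b2 b3 b1a b2a b3a b12 b13 hall.
  have o2 : e b2 b1 || e b2 b3.
    apply: (other b2 b1 b3) => //; try by rewrite eq_sym.
    by move=> w; case/or4P: (hall w) => ->; rewrite ?orbT.
  have o3 : e b3 b1 || e b3 b2.
    apply: (other b3 b1 b2) => //; rewrite 1?eq_sym //.
    by move=> w; case/or4P: (hall w) => ->; rewrite ?orbT.
  have tw : forall p q r, p != q -> q != r -> p != r -> p != a -> q != a -> r != a ->
      (forall w : T, [|| w == a, w == p, w == q | w == r]) ->
      e p q -> e p r -> e q r -> Rh e p q.
    move=> p q r pq qr pr pa qa ra hw epq epr eqr'.
    rewrite /Rh pq /=; apply/orP; right; apply/forallP => w; apply/implyP => wp; apply/implyP => wq.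
    case/or4P: (hw w) => /eqP hw'; subst w.
    - by rewrite hi' hi'.
    - by rewrite eqxx in wp.
    - by rewrite eqxx in wq.
    - by rewrite epr eqr'.
  case E12: (e b1 b2); case E23: (e b2 b3); case E13: (e b1 b3).
  - exfalso.
    have r12 : Rh e b1 b2 by apply: (tw b1 b2 b3).
    have hall' : forall w : T, [|| w == a, w == b1, w == b3 | w == b2].
      by move=> w; case/or4P: (hall w) => ->; rewrite ?orbT.
    have r13 : Rh e b1 b3 by apply: (tw b1 b3 b2) => //; rewrite 1?eq_sym // Hsym.
    have := hma _ _ _ r12 r13; rewrite !Some_eq b1a b2a b3a => /(_ isT isT isT) h.
    by rewrite h eqxx in b23.
  - exact: (iso_K1P3 Hsym eirr ab1 ab2 ab3 b12 b13 b23 hall hi E12 E23 (negbT E13)).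
  - have e21 : e b2 b1 by rewrite Hsym E12.
    apply: (iso_K1P3 Hsym eirr (p:=b2) (c:=b1) (q:=b3)) => //; rewrite ?E23 //.
    by move=> w; case/or4P: (hall w) => ->; rewrite ?orbT.
  - by move: o3; rewrite Hsym E13 Hsym E23.
  - have e32 : e b3 b2 by rewrite Hsym E23.
    apply: (iso_K1P3 Hsym eirr (p:=b1) (c:=b3) (q:=b2)) => //; rewrite ?E12 //.
    by move=> w; case/or4P: (hall w) => ->; rewrite ?orbT.
  - by move: o1; rewrite E12 E13.
  - by move: o2; rewrite Hsym E12 E23.
  - by move: o1; rewrite E12 E13.
left.
have [b /andP[ba _]] := two_out h3 a a.
have [c /andP[ca cb]] := two_out h3 a b.
have ab : a != b by rewrite eq_sym.
have ac : a != c by rewrite eq_sym.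
have bc : b != c by rewrite eq_sym.
have hall := all3 hc3 ab ac bc.
apply: (iso_K1K2 Hsym eirr ab ac bc hall hi).
have [z /and3P[ez za zb]] := nbr b c ba ca bc.
case/or3P: (hall z) => /eqP hz; subst z.
- by rewrite eqxx in za.
- by rewrite eqxx in zb.
- by [].
Qed.

Lemma D2_deg2 u : D2ex e u -> deg2 (RC e) [set u].
Proof.
case=> v [a [b [hv ha hb [ab ra rb]]]].
exists (Some v), (Some a), (Some b); rewrite !inE hv ha hb Some_eq ab.
by split.
Qed.

Lemma D2None_deg2 : D2ex e None -> deg2 (RC e) set0.
Proof.
case=> v [a [b [hv ha hb [ab ra rb]]]].
by exists (Some v), (Some a), (Some b); rewrite !inE Some_eq ab; split.
Qed.

Lemma match_matchX u : matchT e u -> matchX (RC e) [set u].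
Proof.
move=> hm [x|] [y|] [z|] //= rxy rxz; rewrite !inE => hx hy hz.
by rewrite (hm x y z).
Qed.

Lemma matchNone_X : matchT e None -> matchX (RC e) set0.
Proof.
move=> hm [x|] [y|] [z|] //= rxy rxz _ _ _.
by rewrite (hm x y z).
Qed.

Lemma nonnb_of : 2 <= ncomp e -> forall x : T, exists y, (y != x) && ~~ e x y.
Proof.
move=> h2 x; have [p [q npq]] := ncomp2 Hsym h2.
case cpx: (connect e p x).
  have nxq : ~~ connect e x q by apply: conn_trans_n cpx npq.
  exists q; rewrite eq_sym (nconn_neq nxq) /=; by apply: contra nxq => /connect1.
have npx : ~~ connect e x p by rewrite (conn_sym Hsym) cpx.
exists p; rewrite eq_sym (nconn_neq npx) /=; by apply: contra npx => /connect1.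
Qed.
End Final.

Unset Implicit Arguments.
Set Strict Implicit.
Theorem mainTheorem11 (T : finType) (e : rel T) :
  symmetric e -> irreflexive e -> 2 <= ncomp e ->
  [/\ 4 <= ncomp e -> OSR_B (corona_adj e),
      ncomp e = 3 ->
        (isomorphic e (edgeless 3) -> OSR_N (corona_adj e)) /\
        (~ isomorphic e (edgeless 3) -> OSR_B (corona_adj e))
    & ncomp e = 2 ->
        [/\ isomorphic e (edgeless 2) -> OSR_M (corona_adj e),
            caseN2 e -> OSR_N (corona_adj e)
          & ~ isomorphic e (edgeless 2) -> ~ caseN2 e -> OSR_B (corona_adj e)]].
Proof.
move=> Hsym eirr h2.
have HA := HA_corona Hsym (nonnb_of Hsym h2).
have HB : forall (M : {set option T}) x y, RC e x y -> x \notin M -> y \notin M -> ~ strong_resolving (corona_adj e) M.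
  by move=> M x y; apply: HB_corona.
have Rs := RC_sym Hsym.
have Ri : irreflexive (RC e) := @RC_irr T e.
have BB : (forall u, D2ex e u) -> OSR_B (corona_adj e).
  move=> hd; split.
    by apply: (Mgame_breaker Ri HB None) => u; apply: D2_deg2.
  by apply: (Bgame_breaker Ri HB); apply: D2None_deg2.
have NN : (exists u, matchT e u) -> D2ex e None -> OSR_N (corona_adj e).
  move=> [u hm] hd; split.
    by apply: (Mgame_maker Rs Ri HA (u:=u)); apply: match_matchX.
  by apply: (Bgame_breaker Ri HB); apply: D2None_deg2.
have MM : matchT e None -> OSR_M (corona_adj e).
  move=> hm; split.
    by apply: (Mgame_maker Rs Ri HA (u:=None)); apply: match_matchX.
  by apply: (Bgame_maker Rs Ri HA); apply: matchNone_X.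
split.
- by move=> h4; apply: BB; apply: ncomp4_D2.
- move=> h3; split.
    move=> iso; apply: NN; first exact: iso3_match iso.
    by apply: ncomp3_D2None => //; rewrite h3.
  by move=> ni; apply: BB; apply: ncomp3_notiso.
- move=> hn; split.
  + by move=> iso; apply: MM; apply: iso2_match iso.
  + move=> hc; have [hc3 hm] := caseN2_facts hc.
    by apply: NN => //; apply: ncomp2_D2None.
  + by move=> ni nc; apply: BB; apply: c3.
Qed.
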